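(* Let $d \geq 1$ and $n \geq 0$ be integers and let $\mathbf{x} \in \mathbb{Z}^{n+1}_{\mathrm{prim}}$. Then the ball $\mathcal{B}_{N_{d,n}}(\|\mathbf{x}\|)$ contains $N_{d,n} - 1$ linearly independent vectors of the lattice $\Lambda_{\nu_{d,n}(\mathbf{x})}$.
   Context: $\|\cdot\|$ is the Euclidean norm and $\mathcal{B}_N(u) = \{\mathbf{y} \in \mathbb{R}^N : \|\mathbf{y}\| \leq u\}$. $\mathbb{Z}^{N}_{\mathrm{prim}}$ is the set of vectors in $\mathbb{Z}^N$ whose coordinates have gcd $1$. $N_{d,n} = \binom{n+d}{d}$ and $\nu_{d,n} : \mathbb{R}^{n+1} \to \mathbb{R}^{N_{d,n}}$ is the Veronese map listing all monomials of degree $d$ in the $n+1$ coordinates in lexicographic order. For $\mathbf{c} \in \mathbb{Z}^N$, $\Lambda_{\mathbf{c}} = \{\mathbf{y} \in \mathbb{Z}^N : \langle \mathbf{c}, \mathbf{y}\rangle = 0\}$, with $\langle\cdot,\cdot\rangle$ the Euclidean inner product. *)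

(* Defs.v *)
From HB Require Import structures.
From mathcomp Require Import all_boot all_order all_algebra.
Unset Strict Implicit. Unset Printing Implicit Defensive.
Import Order.TTheory GRing.Theory Num.Theory.
Local Open Scope ring_scope.

Definition Ndn (d n : nat) : nat := 'C(n + d, d).

(* Exponent vectors of monomials of degree d in the n+1 variables x_0..x_n.
   These index the coordinates of the Veronese embedding. *)
Definition mono (n d : nat) : predArgType :=
  {e : {ffun 'I_n.+1 -> 'I_d.+1} | (\sum_i (e i : nat) == d)%N}.
HB.instance Definition _ n d := Finite.on (mono n d).

Arguments mono : clear implicits.
Definition veronese (d n : nat) (x : 'I_n.+1 -> int) : mono n d -> int :=
  fun e => \prod_(i < n.+1) x i ^+ (val e i : nat).

Definition primitive {k : nat} (x : 'I_k -> int) : Prop :=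
  (\big[gcdn/0%N]_(i < k) `|x i|%N)%N = 1%N.

Definition dotz {I : finType} (c y : I -> int) : int := \sum_(i : I) c i * y i.
Definition sqnorm {I : finType} (y : I -> int) : int := \sum_(i : I) y i ^+ 2.

Definition in_Lambda {I : finType} (c y : I -> int) : Prop := dotz c y = 0.

(* Linear independence (over Q, equivalently over R) of a family of integer vectors. *)
Definition lin_indep {I : finType} {k : nat} (y : 'I_k -> I -> int) : Prop :=
  forall c : 'I_k -> rat,
    (forall m : I, \sum_(j < k) c j * (y j m)%:~R = 0) -> forall j, c j = 0.

(* Main.v *)
Require Import Defs.
From mathcomp Require Import all_boot all_order all_algebra.
From mathcomp Require Import zify ring.
Import Order.TTheory GRing.Theory Num.Theory.
Set Implicit Arguments. Unset Strict Implicit.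
Lemma card_mono n d : #|mono n d| = Ndn d n.
Proof.
rewrite /Ndn.
have -> : 'C(n + d, d) = 'C(n + d, n).
  by rewrite -bin_sub ?leq_addl // addnK.
rewrite -card_ord_partitions.
pose tf (t : n.+1.-tuple 'I_d.+1) : {ffun 'I_n.+1 -> 'I_d.+1} := [ffun i => tnth t i].
rewrite -(card_in_imset (f := tf)); last first.
  move=> t1 t2 _ _ /ffunP H; apply: eq_from_tnth => i; have := H i; by rewrite !ffunE.
rewrite card_sig; apply: eq_card => f; rewrite inE.
apply/idP/imsetP.
- move=> Hf; exists [tuple f i | i < n.+1]; last by apply/ffunP => i; rewrite ffunE tnth_mktuple.
  by rewrite inE big_tuple; under eq_bigr do rewrite tnth_mktuple.
- case=> t; rewrite inE big_tuple => Ht ->.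
  by under eq_bigr do rewrite ffunE.
Qed.
Lemma sum_two n d (e : mono n d) (i j : 'I_n.+1) : i != j -> val e i + val e j <= d.
Proof.
move=> ij; have Hs : (\sum_i (val e i : nat))%N = d := eqP (valP e).
apply: leq_trans (eq_leq Hs).
rewrite (bigD1 i) //= (bigD1 j) /=; last by rewrite eq_sym.
by rewrite addnA leq_addr.
Qed.

Definition shiftf n d (k j : 'I_n.+1) (e : mono n d) : {ffun 'I_n.+1 -> 'I_d.+1} :=
  [ffun i => inord (val e i + (i == k) - (i == j))].
Definition shift n d k j (e : mono n d) : mono n d := insubd e (shiftf k j e).

Lemma shift_val n d (k j : 'I_n.+1) (e : mono n d) : j != k -> (0 < val e j)%N ->
  forall i, (val (shift k j e) i : nat) = val e i + (i == k) - (i == j).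
Proof.
move=> jk ej.
have H : forall i, (shiftf k j e i : nat) = val e i + (i == k) - (i == j).
  move=> i; rewrite ffunE inordK //.
  case: (eqVneq i k) => [->|ik].
    rewrite ?eqxx eq_sym (negbTE jk) subn0 addn1 ltnS.
    have := sum_two e jk. lia.
  rewrite addn0; have := ltn_ord (val e i). lia.
rewrite /shift insubdK // /in_mem /=.
rewrite (bigD1 k) //= (bigD1 j) /=; last by [].
rewrite (eq_bigr (fun i => val e i : nat)); last first.
  move=> i /andP[ik ij]; rewrite H (negbTE ik) (negbTE ij); lia.
rewrite !H eqxx (negbTE jk) [k == j]eq_sym (negbTE jk) eqxx.
have E : forall a b c, (0 < b)%N -> a + true - false + (b + false - true + c) = a + (b + c) by move=> *; lia.
rewrite E //.
have := valP e; rewrite /= (bigD1 k) //= (bigD1 j) //=.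
Qed.
Local Open Scope ring_scope.

Lemma prim_nz m (x : 'I_m -> int) : primitive x -> exists i, x i != 0.
Proof.
move=> H; case: (pickP (fun i => x i != 0)) => [i Hi | H0]; first by exists i.
exfalso; move: H; rewrite /primitive big1 // => i _.
by have := H0 i; rewrite /= => /negbFE/eqP ->.
Qed.

Lemma e0_proof n d (k : 'I_n.+1) :
  (\sum_i ([ffun i => if i == k then ord_max else ord0] : {ffun 'I_n.+1 -> 'I_d.+1}) i == d)%N.
Proof.
rewrite (bigD1 k) //= ffunE eqxx big1 ?addn0 // => i ik.
by rewrite ffunE (negbTE ik).
Qed.

Definition e0 n d (k : 'I_n.+1) : mono n d :=
  exist (fun e : {ffun 'I_n.+1 -> 'I_d.+1} => (\sum_i (e i : nat) == d)%N) _ (e0_proof d k).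

Lemma not_e0 n d (k : 'I_n.+1) (e : mono n d) : e != e0 d k ->
  exists2 j, j != k & (0 < val e j)%N.
Proof.
move=> He; case: (pickP (fun j => (j != k) && (0 < val e j)%N)) => [j /andP[]|H].
  by exists j.
exfalso; move/negP: He; apply; apply/eqP/val_inj/ffunP => i /=.
have Hz : forall j, j != k -> (val e j : nat) = 0%N.
  by move=> j jk; have := H j; rewrite /= jk /=; case: (val e j : nat).
rewrite ffunE; case: eqVneq => [->|ik]; apply/val_inj => /=; last exact: Hz.
have Hs : (\sum_i (val e i : nat))%N = d := eqP (valP e).
move: Hs; rewrite (bigD1 k) //= big1 ?addn0 //.

Qed.

Lemma veronese_shift n d (x : 'I_n.+1 -> int) (k j : 'I_n.+1) (e : mono n d) :
  j != k -> (0 < val e j)%N ->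
  veronese d n x (shift k j e) * x j = veronese d n x e * x k.
Proof.
move=> jk ej; rewrite /veronese.
have kj : k != j by rewrite eq_sym.
rewrite (bigD1 k) //= (bigD1 j) //= [in RHS](bigD1 k) //= [in RHS](bigD1 j) //=.
rewrite (eq_bigr (fun i => x i ^+ (val e i : nat))); last first.
  by move=> i /andP[ik ij]; rewrite shift_val // (negbTE ik) (negbTE ij) addn0 subn0.
rewrite !shift_val // eqxx (negbTE kj) (negbTE jk) addn1 subn0 addn0.
rewrite eqxx subn1.
set P := \prod_(_ < _ | _) _. set a := x k. set b := x j. set u := (val e k : nat).
have Ej : b ^+ (val e j : nat) = b ^+ (val e j : nat).-1 * b by rewrite -exprSr prednK.
rewrite Ej exprS. set w := (_.-1). ring.
Qed.

Lemma sum_delta (I : finType) (F : I -> int) (a : I) c :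
  \sum_f F f * (if f == a then c else 0) = F a * c.
Proof.
rewrite (bigD1 a) //= eqxx big1 ?addr0 // => f /negbTE ->; by rewrite mulr0.
Qed.

Lemma shift_neq n d (k j : 'I_n.+1) (e : mono n d) :
  j != k -> (0 < val e j)%N -> shift k j e != e.
Proof.
move=> jk ej; apply/eqP => E; have := shift_val jk ej k.
rewrite E eqxx eq_sym (negbTE jk); lia.
Qed.

Lemma shift_k n d (k j : 'I_n.+1) (e : mono n d) :
  j != k -> (0 < val e j)%N -> (val (shift k j e) k : nat) = (val e k).+1.
Proof. by move=> jk ej; rewrite shift_val // eqxx eq_sym (negbTE jk); lia. Qed.

Theorem lemma5 (d n : nat) (x : 'I_n.+1 -> int) :
  (1 <= d)%N -> primitive x ->
  exists y : 'I_(Ndn d n).-1 -> mono n d -> int,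
    (forall j, in_Lambda (veronese d n x) (y j)) /\
    (forall j, sqnorm (y j) <= sqnorm x) /\
    lin_indep y.
Proof.
move=> d1 /prim_nz [k xk].
pose E0 := e0 d k.
have Hc : ((Ndn d n).-1 = #|predC1 E0|)%N by rewrite cardC1 card_mono.
pose g (j : 'I_(Ndn d n).-1) : mono n d := enum_val (cast_ord Hc j).
have gP : forall j, g j != E0.
  by move=> j; have := enum_valP (cast_ord Hc j).
have g_inj : injective g.
  by move=> j1 j2 /enum_val_inj /cast_ord_inj.
pose jj (e : mono n d) := odflt k [pick j | (j != k) && (0 < val e j)%N].
have jjP : forall e, e != E0 -> jj e != k /\ (0 < val e (jj e))%N.
  move=> e /not_e0 [j jk ej]; rewrite /jj; case: pickP => [i /andP[] //| H].
  by have := H j; rewrite jk ej.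
pose sh e := shift k (jj e) e.
exists (fun j f => (if f == g j then x k else 0) - (if f == sh (g j) then x (jj (g j)) else 0)).
split; [|split].
- move=> j; rewrite /in_Lambda /dotz.
  under eq_bigr do rewrite mulrBr.
  rewrite sumrB !sum_delta /sh.
  have [H1 H2] := jjP _ (gP j).
  by rewrite veronese_shift // subrr.
- move=> j; have [H1 H2] := jjP _ (gP j); have Hne := shift_neq H1 H2.
  rewrite /sqnorm (bigD1 (g j)) //= (bigD1 (sh (g j))) /=; last exact: Hne.
  rewrite big1; last first.
    by move=> f /andP[f1 f2]; rewrite (negbTE f1) (negbTE f2) subrr expr0n.
  rewrite eqxx [g j == _]eq_sym (negbTE Hne) eqxx subr0 sub0r sqrrN addr0.
  rewrite [X in _ <= X](bigD1 k) //= (bigD1 (jj (g j))) //=.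
  rewrite lerD2l lerDl; apply: sumr_ge0 => i _; exact: sqr_ge0.
- move=> c Hc0.
  have key : forall j, (forall i, (val (g i) k < val (g j) k)%N -> c i = 0) -> c j = 0.
    move=> j IH; have := Hc0 (g j); rewrite (bigD1 j) //= big1 ?addr0.
      have [H1 H2] := jjP _ (gP j); have Hne := shift_neq H1 H2.
      rewrite eqxx [g j == _]eq_sym (negbTE Hne) subr0.
      by move/eqP; rewrite mulf_eq0 intr_eq0 (negbTE xk) orbF => /eqP.
    move=> i ij.
    rewrite (_ : (g j == g i) = false); last first.
      by apply/negbTE; apply: contra ij => /eqP /g_inj ->.
    case: eqVneq => [E|_]; last by rewrite subrr mulr0.
    have [H1 H2] := jjP _ (gP i).
    by rewrite IH ?mul0r // E /sh shift_k.
  have : forall t j, (val (g j) k < t)%N -> c j = 0.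
    elim=> [//|t IHt] j Hj; apply: key => i Hi; apply: IHt; lia.
  by move=> H j; exact: H _ j (ltnSn _).
Qed.
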